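(* For every integer $n\ge1$ and every $\eta>0$, $$\sup_{0\ne f\in\mathcal{T}_n(\eta)}\frac{|f'(0)|}{\|f\|_{[0,1]}} \ge 2(n-1)^2.$$
   Context: For $\eta>0$, $\mathcal{T}_n(\eta)$ denotes the set of all functions $f(t)=\sum_{j=1}^na_je^{i\lambda_jt}$ with $a_j\in\mathbb{C}$ and real $0<\lambda_1<\lambda_2<\cdots<\lambda_n<\eta$. $\|f\|_{[0,1]}:=\sup_{t\in[0,1]}|f(t)|$. *)

(* Defs.v *)
From Stdlib Require Import Reals.
Open Scope R_scope.

Fixpoint fsum (n : nat) (g : nat -> R) : R :=
  match n with
  | O => 0
  | S k => fsum k g + g k
  end.

Definition Cmod (z : R * R) : R := sqrt (fst z ^ 2 + snd z ^ 2).

(* The exponential sum f(t) = sum_{j<n} a_j e^{i lam_j t},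
   with a_j = ar j + i ai j, returned as (Re f(t), Im f(t)). *)
Definition expsum (n : nat) (lam ar ai : nat -> R) (t : R) : R * R :=
  (fsum n (fun j => ar j * cos (lam j * t) - ai j * sin (lam j * t)),
   fsum n (fun j => ar j * sin (lam j * t) + ai j * cos (lam j * t))).

Definition admissible_freqs (n : nat) (eta : R) (lam : nat -> R) : Prop :=
  (forall j, (j < n)%nat -> 0 < lam j < eta) /\
  (forall i j, (i < j)%nat -> (j < n)%nat -> lam i < lam j).

Definition sup_norm01 (f : R -> R * R) (M : R) : Prop :=
  is_lub (fun y => exists t, 0 <= t <= 1 /\ y = Cmod (f t)) M.

(* Main.v *)
Require Import Defs.
From Stdlib Require Import Reals Lra Psatz Classical.
From Coquelicot Require Complex.
Open Scope R_scope.

Notation C := (R * R)%type.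
Notation cadd := Complex.Cplus.
Notation cmul := Complex.Cmult.
Notation cmod := Complex.Cmod.

Ltac ceq := apply injective_projections; cbn [fst snd Complex.Cplus Complex.Cmult]; ring.

Definition E (x : R) : C := (cos x, sin x).

Fixpoint csum (N : nat) (g : nat -> C) : C :=
  match N with O => (0,0) | S k => cadd (csum k g) (g k) end.

Lemma csum_ext N f g : (forall j, (j < N)%nat -> f j = g j) -> csum N f = csum N g.
Proof. induction N; intros H; simpl; auto. rewrite IHN by (intros; apply H; lia). rewrite H by lia. auto. Qed.

Lemma csum_add N f g : csum N (fun j => cadd (f j) (g j)) = cadd (csum N f) (csum N g).
Proof. induction N; simpl. ceq. rewrite IHN. ceq. Qed.

Lemma csum_scal N c f : csum N (fun j => cmul c (f j)) = cmul c (csum N f).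
Proof. induction N; simpl. ceq. rewrite IHN. ceq. Qed.

Lemma csum_shift N f : csum (S N) f = cadd (f O) (csum N (fun j => f (S j))).
Proof. induction N; simpl. ceq. simpl in IHN. rewrite IHN. ceq. Qed.

Lemma csum_nz N a : csum N a <> (0,0) -> exists j, (j < N)%nat /\ a j <> (0,0).
Proof. induction N; simpl; intros H. congruence.
  destruct (classic (a N = (0,0))) as [H0|H0].
  - destruct IHN as [j [? ?]]. { intro H1. apply H. rewrite H1, H0. ceq. }
    exists j; split; auto.
  - exists N; split; auto.
Qed.

Definition lamf (d : R) (j : nat) : R := d * INR (S j).

Definition Rep (d : R) (N : nat) (g : R -> C) (v dv : C) : Prop :=
  exists a : nat -> C,
    (forall t, g t = csum N (fun j => cmul (a j) (E (lamf d j * t)))) /\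
    v = csum N a /\ dv = csum N (fun j => cmul (a j) (0, lamf d j)).

Lemma Rep_ext d N g h v dv v' dv' : (forall t, g t = h t) -> v = v' -> dv = dv' ->
  Rep d N g v dv -> Rep d N h v' dv'.
Proof. intros Hg -> -> [a [H1 H2]]. exists a. split; auto. intros t. rewrite <- Hg. auto. Qed.

Lemma Rep_at0 d N g v dv : Rep d N g v dv -> g 0 = v.
Proof. intros [a [H1 [H2 _]]]. rewrite H1, H2. apply csum_ext. intros j _.
  unfold E. rewrite Rmult_0_r, cos_0, sin_0. ceq. Qed.

Lemma Rep_E d : Rep d 1 (fun t => E (d * t)) (1,0) (0,d).
Proof. exists (fun _ => (1,0)). split; [|split].
  - intros t. simpl. unfold lamf, E. simpl. rewrite Rmult_1_r. ceq.
  - simpl. ceq.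
  - simpl. unfold lamf. simpl. ceq.
Qed.

Lemma csum_S_ext N f g : (forall j, (j < N)%nat -> f j = g j) -> f N = (0,0) ->
  csum (S N) f = csum N g.
Proof. intros H H0. simpl. rewrite H0, (csum_ext N f g H). ceq. Qed.

Lemma Rep_extend d N g v dv : Rep d N g v dv -> Rep d (S N) g v dv.
Proof. intros [a [H1 [H2 H3]]].
  exists (fun j => if (j <? N)%nat then a j else (0,0)). split; [|split].
  - intros t. rewrite H1. symmetry. apply csum_S_ext.
    + intros j Hj. apply Nat.ltb_lt in Hj. rewrite Hj. auto.
    + rewrite Nat.ltb_irrefl. ceq.
  - rewrite H2. symmetry. apply csum_S_ext.
    + intros j Hj. apply Nat.ltb_lt in Hj. rewrite Hj. auto.
    + rewrite Nat.ltb_irrefl. auto.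
  - rewrite H3. symmetry. apply csum_S_ext.
    + intros j Hj. apply Nat.ltb_lt in Hj. rewrite Hj. auto.
    + rewrite Nat.ltb_irrefl. ceq.
Qed.

Lemma Rep_add d N g1 g2 v1 v2 d1 d2 : Rep d N g1 v1 d1 -> Rep d N g2 v2 d2 ->
  Rep d N (fun t => cadd (g1 t) (g2 t)) (cadd v1 v2) (cadd d1 d2).
Proof. intros [a [H1 [H2 H3]]] [b [K1 [K2 K3]]].
  exists (fun j => cadd (a j) (b j)). split; [|split].
  - intros t. rewrite H1, K1, <- csum_add. apply csum_ext. intros; ceq.
  - rewrite H2, K2, <- csum_add. auto.
  - rewrite H3, K3, <- csum_add. apply csum_ext. intros; ceq.
Qed.

Lemma Rep_scal d N c g v dv : Rep d N g v dv ->
  Rep d N (fun t => cmul c (g t)) (cmul c v) (cmul c dv).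
Proof. intros [a [H1 [H2 H3]]].
  exists (fun j => cmul c (a j)). split; [|split].
  - intros t. rewrite H1, <- csum_scal. apply csum_ext. intros; ceq.
  - rewrite H2, <- csum_scal. auto.
  - rewrite H3, <- csum_scal. apply csum_ext. intros; ceq.
Qed.

Lemma E_add x y : cmul (E x) (E y) = E (x + y).
Proof. unfold E. rewrite cos_plus, sin_plus. ceq. Qed.

Lemma Rep_shift d N g v dv : Rep d N g v dv ->
  Rep d (S N) (fun t => cmul (E (d * t)) (g t)) v (cadd dv (cmul (0,d) v)).
Proof. intros [a [H1 [H2 H3]]].
  exists (fun j => match j with O => (0,0) | S k => a k end). split; [|split].
  - intros t. rewrite H1, csum_shift, <- csum_scal.
    assert (Hs: csum N (fun j => cmul (E (d*t)) (cmul (a j) (E (lamf d j * t)))) =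
                csum N (fun j => cmul (a j) (E (lamf d (S j) * t)))).
    { apply csum_ext. intros j _.
      replace (lamf d (S j) * t) with (d * t + lamf d j * t).
      2:{ unfold lamf. rewrite (S_INR (S j)). ring. }
      rewrite <- E_add. ceq. }
    rewrite Hs. ceq.
  - rewrite H2, csum_shift. change (fun j => a j) with a. ceq.
  - rewrite H3, H2, csum_shift, <- csum_scal, <- csum_add.
    assert (Hs: csum N (fun j => cadd (cmul (a j) (0, lamf d j)) (cmul (0,d) (a j))) =
                csum N (fun j => cmul (a j) (0, lamf d (S j)))).
    { apply csum_ext. intros j _. unfold lamf. rewrite (S_INR (S j)). ceq. }
    rewrite Hs. ceq.
Qed.

Definition u (d t : R) : C := cmul (cadd (E (d * t)) (-1, 0)) (0, - / d).

Lemma Rep_u d N g v dv : 0 < d -> Rep d N g v dv ->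
  Rep d (S N) (fun t => cmul (u d t) (g t)) (0,0) v.
Proof. intros Hd H.
  assert (H1 := Rep_shift _ _ _ _ _ H).
  assert (H2 := Rep_scal _ _ (-1,0) _ _ _ (Rep_extend _ _ _ _ _ H)).
  assert (H3 := Rep_scal _ _ (0, - / d) _ _ _ (Rep_add _ _ _ _ _ _ _ _ H1 H2)).
  eapply Rep_ext; [| | | exact H3].
  - intros t. unfold u. ceq.
  - ceq.
  - apply injective_projections; cbn [fst snd Complex.Cplus Complex.Cmult]; field; lra.
Qed.

Fixpoint Tc (k : nat) (z : C) : C :=
  match k with
  | O => (1,0)
  | S k' => match k' with
            | O => cadd (cmul (2,0) z) (-1,0)
            | S k'' => cadd (cmul (cmul (2,0) (cadd (cmul (2,0) z) (-1,0))) (Tc k' z))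
                            (cmul (-1,0) (Tc k'' z))
            end
  end.

Lemma Tc_SS k z : Tc (S (S k)) z =
  cadd (cmul (cmul (2,0) (cadd (cmul (2,0) z) (-1,0))) (Tc (S k) z)) (cmul (-1,0) (Tc k z)).
Proof. reflexivity. Qed.

Definition F (d : R) (k : nat) (t : R) : C := cmul (E (d * t)) (Tc k (u d t)).
Definition sv (k : nat) : C := ((-1)^k, 0).
Definition dv (d : R) (k : nat) : C := (2 * INR k ^ 2 * (-1)^(S k), d * (-1)^k).

Ltac ceq2 := unfold sv, dv; apply injective_projections; cbn [fst snd Complex.Cplus Complex.Cmult pow];
  rewrite ?S_INR, ?INR_0; ring.

Lemma Rep_F d : 0 < d -> forall k,
  Rep d (S k) (F d k) (sv k) (dv d k) /\ Rep d (S (S k)) (F d (S k)) (sv (S k)) (dv d (S k)).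
Proof. intros Hd k. induction k as [|k [A B]].
  - split.
    + eapply Rep_ext; [| | | apply Rep_E]. intros t; unfold F; simpl; ceq. ceq2. ceq2.
    + assert (X1 := Rep_scal _ _ (2,0) _ _ _ (Rep_u _ _ _ _ _ Hd (Rep_E d))).
      assert (X2 := Rep_scal _ _ (-1,0) _ _ _ (Rep_extend _ _ _ _ _ (Rep_E d))).
      eapply Rep_ext; [| | | apply (Rep_add _ _ _ _ _ _ _ _ X1 X2)].
      intros t; unfold F; simpl; ceq. ceq2. ceq2.
  - split; auto.
    assert (X1 := Rep_scal _ _ (4,0) _ _ _ (Rep_u _ _ _ _ _ Hd B)).
    assert (X2 := Rep_scal _ _ (-2,0) _ _ _ (Rep_extend _ _ _ _ _ B)).
    assert (X3 := Rep_scal _ _ (-1,0) _ _ _ (Rep_extend _ _ _ _ _ (Rep_extend _ _ _ _ _ A))).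
    eapply Rep_ext; [| | | apply (Rep_add _ _ _ _ _ _ _ _ (Rep_add _ _ _ _ _ _ _ _ X1 X2) X3)].
    + intros t; unfold F; rewrite Tc_SS; ceq.
    + ceq2.
    + ceq2.
Qed.

Lemma t1 x : 0 <= x <= 1 -> 0 <= x - sin x <= x^2.
Proof. intros H. assert (PI/2 > 1) by (generalize PI2_1; lra).
destruct (sin_bound x 0) as [H1 _]; try lra.
unfold sin_approx in H1. simpl in H1. unfold sin_term in H1. simpl in H1.
field_simplify in H1. split; [|nra].
destruct (Req_dec x 0) as [->|Hx]. rewrite sin_0; lra.
assert (sin x < x) by (apply sin_lt_x; lra). lra.
Qed.

Lemma t2 x : 0 <= x <= 1 -> 0 <= 1 - cos x <= x^2.
Proof. intros H. assert (PI/2 > 1) by (generalize PI2_1; lra).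
destruct (cos_bound x 0) as [H1 _]; try lra.
unfold cos_approx in H1. simpl in H1. unfold cos_term in H1. simpl in H1.
field_simplify in H1. destruct (COS_bound x). split; nra.
Qed.

Lemma t3 x : 0 <= x <= 1 -> 0 <= sin x <= x.
Proof. intros H. assert (PI/2 > 1) by (generalize PI2_1; lra).
 split. apply sin_ge_0; lra. destruct (t1 x H); lra. Qed.

Lemma cmod_r r : cmod (r, 0) = Rabs r.
Proof. exact (Complex.Cmod_R r). Qed.

Lemma cmod_le x y : cmod (x, y) <= Rabs x + Rabs y.
Proof. replace (x,y) with (cadd (x,0) (0,y)) by ceq.
  eapply Rle_trans. apply Complex.Cmod_triangle. rewrite cmod_r.
  unfold Complex.Cmod. simpl. replace (0 * (0 * 1) + y * (y * 1)) with (Rsqr y) by (unfold Rsqr; ring).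
  rewrite sqrt_Rsqr_abs. lra. Qed.

Lemma cmod_fst z : Rabs (fst z) <= cmod z.
Proof. destruct z as [x y]. unfold Complex.Cmod. simpl. rewrite <- sqrt_Rsqr_abs.
  apply sqrt_le_1_alt. unfold Rsqr. nra. Qed.

Lemma BE d t : 0 < d <= 1 -> 0 <= t <= 1 -> cmod (cadd (E (d*t)) (-1,0)) <= 2 * d.
Proof. intros Hd Ht. assert (Hx : 0 <= d*t <= 1) by nra. unfold E.
  eapply Rle_trans. apply cmod_le. cbn [fst snd Complex.Cplus].
  destruct (t2 _ Hx), (t3 _ Hx).
  rewrite Rabs_left1 by lra. rewrite Rabs_right by lra. nra. Qed.

Lemma Bu d t : 0 < d <= 1 -> 0 <= t <= 1 -> cmod (cadd (u d t) (-t,0)) <= 2 * d.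
Proof. intros Hd Ht. assert (Hx : 0 <= d*t <= 1) by nra. unfold u, E.
  eapply Rle_trans. apply cmod_le. cbn [fst snd Complex.Cplus Complex.Cmult].
  destruct (t2 _ Hx), (t1 _ Hx).
  replace ((cos (d * t) + -1) * 0 - (sin (d * t) + 0) * - / d + - t) with (- ((d*t - sin (d*t)) / d)) by (field; lra).
  replace ((cos (d * t) + -1) * - / d + (sin (d * t) + 0) * 0 + 0) with ((1 - cos (d*t)) / d) by (field; lra).
  rewrite Rabs_Ropp, !Rabs_right.
  2,3: apply Rle_ge; unfold Rdiv; apply Rmult_le_pos; [lra| left; apply Rinv_0_lt_compat; lra].
  assert ((d*t - sin (d*t)) / d <= d). { apply Rmult_le_reg_r with d; [lra|]. unfold Rdiv. rewrite Rmult_assoc, Rinv_l by lra. assert ((d*t)^2 <= d*d) by (simpl; apply Rmult_le_compat; nra). lra. }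
  assert ((1 - cos (d*t)) / d <= d). { apply Rmult_le_reg_r with d; [lra|]. unfold Rdiv. rewrite Rmult_assoc, Rinv_l by lra. assert ((d*t)^2 <= d*d) by (simpl; apply Rmult_le_compat; nra). lra. }
  lra. Qed.

Lemma B2u d t : 0 < d <= 1 -> 0 <= t <= 1 -> cmod (cadd (cmul (2,0) (u d t)) (-1,0)) <= 5.
Proof. intros Hd Ht.
  replace (cadd (cmul (2,0) (u d t)) (-1,0)) with (cadd (cmul (2,0) (cadd (u d t) (-t,0))) (2*t-1,0)) by ceq.
  eapply Rle_trans. apply Complex.Cmod_triangle. rewrite Complex.Cmod_mult, !cmod_r.
  assert (H := Bu d t Hd Ht). rewrite (Rabs_right 2) by lra.
  assert (Rabs (2*t-1) <= 1) by (apply Rabs_le; lra). nra. Qed.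

Definition Tr (k : nat) (t : R) : R := cos (INR k * acos (2*t-1)).

Lemma Tr_SS k t : 0 <= t <= 1 -> Tr (S (S k)) t = 2*(2*t-1) * Tr (S k) t - Tr k t.
Proof. intros Ht. unfold Tr. set (th := acos (2*t-1)).
  assert (Hc : cos th = 2*t-1) by (apply cos_acos; lra).
  replace (INR (S (S k)) * th) with (INR (S k) * th + th) by (rewrite (S_INR (S k)); ring).
  replace (INR k * th) with (INR (S k) * th - th) by (rewrite S_INR; ring).
  rewrite cos_plus, cos_minus, Hc. ring. Qed.

Lemma Tr_0 t : Tr 0 t = 1.
Proof. unfold Tr. simpl. rewrite Rmult_0_l. apply cos_0. Qed.

Lemma Tr_1 t : 0 <= t <= 1 -> Tr 1 t = 2*t-1.
Proof. intros Ht. unfold Tr. simpl. rewrite Rmult_1_l. apply cos_acos; lra. Qed.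

Lemma Tr_bd k t : Rabs (Tr k t) <= 1.
Proof. unfold Tr. apply Rabs_le. apply COS_bound. Qed.

Fixpoint Ck (k : nat) : R :=
  match k with
  | O => 2
  | S k' => match k' with O => 14 | S k'' => 10 * Ck k' + Ck k'' + 8 end
  end.

Lemma Ck_pos k : 0 <= Ck k /\ 0 <= Ck (S k).
Proof. induction k as [|k [A B]]; simpl; [lra|]. split; auto. simpl in B. lra. Qed.

Definition err d k t := cadd (F d k t) (- Tr k t, 0).

Lemma err_bd d t : 0 < d <= 1 -> 0 <= t <= 1 -> forall k,
  cmod (err d k t) <= Ck k * d /\ cmod (err d (S k) t) <= Ck (S k) * d.
Proof. intros Hd Ht k. induction k as [|k [A B]].
  - split.
    + unfold err, F. rewrite Tr_0. simpl Ck.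
      match goal with |- cmod ?z <= _ => replace z with (cadd (E (d*t)) (-1,0)) by (simpl; ceq) end.
      apply BE; auto.
    + unfold err, F. rewrite Tr_1 by auto. simpl Ck.
      match goal with |- cmod ?z <= _ => replace z with
        (cadd (cmul (cadd (E (d*t)) (-1,0)) (cadd (cmul (2,0) (u d t)) (-1,0))) (cmul (2,0) (cadd (u d t) (-t,0)))) by (simpl; ceq) end.
      eapply Rle_trans. apply Complex.Cmod_triangle. rewrite !Complex.Cmod_mult, cmod_r.
      assert (H1 := BE d t Hd Ht). assert (H2 := B2u d t Hd Ht). assert (H3 := Bu d t Hd Ht).
      rewrite (Rabs_right 2) by lra.
      assert (cmod (cadd (E (d * t)) (-1, 0)) * cmod (cadd (cmul (2, 0) (u d t)) (-1, 0)) <= 2*d*5).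
      { apply Rmult_le_compat; auto using Complex.Cmod_ge_0. }
      lra.
  - split; auto.
    replace (err d (S (S k)) t) with
      (cadd (cadd (cmul (cmul (2,0) (cadd (cmul (2,0) (u d t)) (-1,0))) (err d (S k) t))
                  (cmul (cmul (4,0) (cadd (u d t) (-t,0))) (Tr (S k) t, 0)))
            (cmul (-1,0) (err d k t))).
    2:{ unfold err, F. rewrite Tr_SS by auto. rewrite Tc_SS. ceq. }
    eapply Rle_trans. apply Complex.Cmod_triangle.
    eapply Rle_trans. apply Rplus_le_compat_r, Complex.Cmod_triangle.
    rewrite !Complex.Cmod_mult, !cmod_r.
    assert (H2 := B2u d t Hd Ht). assert (H3 := Bu d t Hd Ht). assert (H4 := Tr_bd (S k) t).
    rewrite (Rabs_right 2), (Rabs_right 4), (Rabs_left (-1)) by lra.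
    change (Ck (S (S k))) with (10 * Ck (S k) + Ck k + 8).
    assert (cmod (cadd (cmul (2, 0) (u d t)) (-1, 0)) * cmod (err d (S k) t) <= 5 * (Ck (S k) * d)).
    { apply Rmult_le_compat; auto using Complex.Cmod_ge_0. }
    assert (cmod (cadd (u d t) (- t, 0)) * Rabs (Tr (S k) t) <= 2 * d * 1).
    { apply Rmult_le_compat; auto using Complex.Cmod_ge_0, Rabs_pos. }
    lra.
Qed.
Lemma dlin l x : derivable_pt_lim (fun t => l * t) x l.
Proof. 
  assert (H := derivable_pt_lim_scal id l x 1 (derivable_pt_lim_id x)).
  rewrite Rmult_1_r in H. exact H. Qed.

Lemma dcos l x : derivable_pt_lim (fun t => cos (l*t)) x (- sin (l*x) * l).
Proof.
  assert (H := derivable_pt_lim_comp (fun t => l*t) cos x l (- sin (l*x)) (dlin l x) (derivable_pt_lim_cos (l*x))).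
  unfold comp in H. exact H. Qed.

Lemma dsin l x : derivable_pt_lim (fun t => sin (l*t)) x (cos (l*x) * l).
Proof.
  assert (H := derivable_pt_lim_comp (fun t => l*t) sin x l (cos (l*x)) (dlin l x) (derivable_pt_lim_sin (l*x))).
  unfold comp in H. exact H. Qed.

Lemma dterm1 a b l : derivable_pt_lim (fun t => a * cos (l*t) - b * sin (l*t)) 0 (- b * l).
Proof.
  assert (H1 := derivable_pt_lim_scal _ a 0 _ (dcos l 0)).
  assert (H2 := derivable_pt_lim_scal _ b 0 _ (dsin l 0)).
  assert (H := derivable_pt_lim_minus _ _ 0 _ _ H1 H2).
  unfold minus_fct, mult_real_fct in H. rewrite Rmult_0_r, sin_0, cos_0 in H.
  replace (- b * l) with (a * (- 0 * l) - b * (1 * l)) by ring. exact H. Qed.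

Lemma dterm2 a b l : derivable_pt_lim (fun t => a * sin (l*t) + b * cos (l*t)) 0 (a * l).
Proof.
  assert (H1 := derivable_pt_lim_scal _ a 0 _ (dsin l 0)).
  assert (H2 := derivable_pt_lim_scal _ b 0 _ (dcos l 0)).
  assert (H := derivable_pt_lim_plus _ _ 0 _ _ H1 H2).
  unfold plus_fct, mult_real_fct in H. rewrite Rmult_0_r, sin_0, cos_0 in H.
  replace (a * l) with (a * (1 * l) + b * (- 0 * l)) by ring. exact H. Qed.

Lemma dfst N lam ar ai : derivable_pt_lim (fun t => fst (expsum N lam ar ai t)) 0 (fsum N (fun j => - ai j * lam j)).
Proof. induction N; simpl.
  - apply derivable_pt_lim_const.
  - assert (H := derivable_pt_lim_plus _ _ 0 _ _ IHN (dterm1 (ar N) (ai N) (lam N))).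
    unfold plus_fct in H. simpl in H. exact H. Qed.

Lemma dsnd N lam ar ai : derivable_pt_lim (fun t => snd (expsum N lam ar ai t)) 0 (fsum N (fun j => ar j * lam j)).
Proof. induction N; simpl.
  - apply derivable_pt_lim_const.
  - assert (H := derivable_pt_lim_plus _ _ 0 _ _ IHN (dterm2 (ar N) (ai N) (lam N))).
    unfold plus_fct in H. simpl in H. exact H. Qed.

Lemma expsum_csum N lam a t :
  expsum N lam (fun j => fst (a j)) (fun j => snd (a j)) t = csum N (fun j => cmul (a j) (E (lam j * t))).
Proof. induction N; simpl. reflexivity. unfold expsum in *. simpl. rewrite <- IHN. unfold E. ceq. Qed.

Lemma csum_fst N f : fst (csum N f) = fsum N (fun j => fst (f j)).
Proof. induction N; simpl; auto. rewrite IHN; auto. Qed.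
Lemma csum_snd N f : snd (csum N f) = fsum N (fun j => snd (f j)).
Proof. induction N; simpl; auto. rewrite IHN; auto. Qed.
Lemma fsum_ext N f g : (forall j, f j = g j) -> fsum N f = fsum N g.
Proof. intros H; induction N; simpl; auto. rewrite IHN, H; auto. Qed.

Theorem theorem9p2 (n : nat) (eta : R) :
  (1 <= n)%nat -> 0 < eta ->
  forall eps : R, 0 < eps ->
  exists (lam ar ai : nat -> R) (dr di M : R),
    admissible_freqs n eta lam /\
    (exists j, (j < n)%nat /\ (ar j <> 0 \/ ai j <> 0)) /\
    derivable_pt_lim (fun t => fst (expsum n lam ar ai t)) 0 dr /\
    derivable_pt_lim (fun t => snd (expsum n lam ar ai t)) 0 di /\
    sup_norm01 (expsum n lam ar ai) M /\
    0 < M /\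
    2 * (INR n - 1) ^ 2 - eps < Cmod (dr, di) / M.
Proof.
  intros Hn Heta eps Heps. destruct n as [|m]; [lia|].
  set (K := Ck m). assert (HK : 0 <= K) by (apply Ck_pos).
  set (m2 := 2 * INR m ^ 2). assert (Hm2 : 0 <= m2) by (unfold m2; assert (0 <= INR m) by apply pos_INR; nra).
  assert (Hm1 : 0 < INR m + 1) by (assert (0 <= INR m) by apply pos_INR; lra).
  set (dl := Rmin 1 (Rmin (eta / (2 * (INR m + 1))) (eps / (m2 * K + 1)))).
  assert (Hd1 : 0 < dl <= 1).
  { unfold dl. split. apply Rmin_pos; [lra|apply Rmin_pos; apply Rdiv_lt_0_compat; nra]. apply Rmin_l. }
  assert (Hd2 : dl * (INR m + 1) < eta).
  { assert (dl <= eta / (2 * (INR m + 1))) by (unfold dl; eapply Rle_trans; [apply Rmin_r|apply Rmin_l]).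
    apply Rle_lt_trans with (eta / (2 * (INR m + 1)) * (INR m + 1)). nra.
    replace (eta / (2 * (INR m + 1)) * (INR m + 1)) with (eta / 2) by (field; lra). lra. }
  assert (Hd3 : m2 * K * dl < eps).
  { assert (dl <= eps / (m2 * K + 1)) by (unfold dl; eapply Rle_trans; [apply Rmin_r|apply Rmin_r]).
    assert ((m2 * K + 1) * dl <= eps).
    { replace eps with ((m2 * K + 1) * (eps / (m2 * K + 1))) by (field; nra).
      apply Rmult_le_compat_l; nra. }
    nra. }
  destruct (Rep_F dl (proj1 Hd1) m) as [HR _].
  assert (H0 := Rep_at0 _ _ _ _ _ HR).
  destruct HR as [a [Ha1 [Ha2 Ha3]]].
  set (lam := lamf dl). set (ar := fun j => fst (a j)). set (ai := fun j => snd (a j)).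
  assert (Hf : forall t, expsum (S m) lam ar ai t = F dl m t).
  { intros t. rewrite Ha1. apply expsum_csum. }
  assert (Hb : forall t, 0 <= t <= 1 -> Cmod (F dl m t) <= 1 + K * dl).
  { intros t Ht. change (Cmod (F dl m t)) with (cmod (F dl m t)).
    replace (F dl m t) with (cadd (err dl m t) (Tr m t, 0)) by (unfold err; ceq).
    eapply Rle_trans. apply Complex.Cmod_triangle. rewrite cmod_r.
    destruct (err_bd dl t Hd1 Ht m) as [E1 _]. assert (H2 := Tr_bd m t). unfold K. lra. }
  set (Sset := fun y => exists t, 0 <= t <= 1 /\ y = Cmod (expsum (S m) lam ar ai t)).
  destruct (completeness Sset) as [M HM].
  { exists (1 + K * dl). intros y [t [Ht ->]]. rewrite Hf. auto. }
  { exists (Cmod (expsum (S m) lam ar ai 0)). exists 0. split; [lra|auto]. }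
  assert (HM1 : 1 <= M).
  { replace 1 with (Cmod (expsum (S m) lam ar ai 0)).
    - apply HM. exists 0; split; [lra|auto].
    - rewrite Hf, H0. change (Cmod (sv m)) with (cmod ((-1)^m, 0)). rewrite cmod_r. apply pow_1_abs. }
  assert (HM2 : M <= 1 + K * dl).
  { apply HM. intros y [t [Ht ->]]. rewrite Hf. auto. }
  exists lam, ar, ai, (fst (dv dl m)), (snd (dv dl m)), M.
  split; [|split; [|split; [|split; [|split; [|split]]]]].
  - split.
    + intros j Hj. unfold lam, lamf. assert (INR (S j) <= INR m + 1) by (rewrite <- S_INR; apply le_INR; lia).
      assert (0 < INR (S j)) by (apply lt_0_INR; lia). split; nra.
    + intros i j Hij Hj. unfold lam, lamf. assert (INR (S i) < INR (S j)) by (apply lt_INR; lia). nra.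
  - destruct (csum_nz (S m) a) as [j [Hj Haj]].
    { rewrite <- Ha2. unfold sv. intros Heq. assert (Hx := f_equal fst Heq). simpl in Hx.
      assert (Hy := pow_1_abs m). rewrite Hx, Rabs_R0 in Hy. lra. }
    exists j. split; auto. unfold ar, ai. destruct (a j) as [x y]. simpl.
    destruct (Req_dec x 0); destruct (Req_dec y 0); subst; auto.
  - replace (fst (dv dl m)) with (fsum (S m) (fun j => - ai j * lam j)). apply dfst.
    rewrite Ha3, csum_fst. apply fsum_ext. intros j. unfold ai, lam. simpl. ring.
  - replace (snd (dv dl m)) with (fsum (S m) (fun j => ar j * lam j)). apply dsnd.
    rewrite Ha3, csum_snd. apply fsum_ext. intros j. unfold ar, lam. simpl. ring.
  - exact HM.
  - lra.
  - rewrite <- surjective_pairing.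
    assert (Hc : m2 <= Cmod (dv dl m)).
    { change (Cmod (dv dl m)) with (cmod (dv dl m)). eapply Rle_trans; [|apply cmod_fst].
      unfold dv. simpl fst. rewrite !Rabs_mult, pow_1_abs, (Rabs_left (-1)), (Rabs_right 2), (Rabs_right (INR m)) by (try apply Rle_ge, pos_INR; lra). rewrite Rabs_R1. unfold m2; simpl; lra. }
    replace (2 * (INR (S m) - 1) ^ 2) with m2 by (unfold m2; rewrite S_INR; ring).
    apply Rmult_lt_reg_r with M; [lra|]. unfold Rdiv. rewrite Rmult_assoc, Rinv_l, Rmult_1_r by lra.
    destruct (Rle_or_lt (m2 - eps) 0).
    + nra.
    + apply Rle_lt_trans with ((m2 - eps) * (1 + K * dl)). apply Rmult_le_compat_l; lra.
      nra.
Qed.
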